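(* Let $G=A\oplus D$ be an abelian group with $A$ reduced and $D$ divisible. Then $G$ is uniformly strongly co-Hopfian if and only if both $A$ and $D$ are uniformly strongly co-Hopfian.
   Context: All groups are abelian. A group $G$ is uniformly strongly co-Hopfian if there is a fixed $m\in\mathbb N$ such that $\phi^m(G)=\phi^{m+1}(G)$ for every endomorphism $\phi$ of $G$. *)

(* Defs.v *)
From HB Require Import structures.
From mathcomp Require Import all_boot all_order all_algebra.
Set Implicit Arguments. Unset Strict Implicit. Unset Printing Implicit Defensive.
Import GRing.Theory.
Local Open Scope ring_scope.

Definition im_of (G : zmodType) (f : G -> G) (x : G) : Prop := exists y, f y = x.

Definition unif_strongly_coHopfian (G : zmodType) : Prop :=
  exists m : nat, forall phi : {additive G -> G},
    forall x : G, im_of (iter m phi) x <-> im_of (iter m.+1 phi) x.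

Definition is_subgroup (G : zmodType) (S : G -> Prop) : Prop :=
  S 0 /\ (forall x y, S x -> S y -> S (x - y)).

Definition divisible_subgroup (G : zmodType) (S : G -> Prop) : Prop :=
  forall x n, S x -> (0 < n)%N -> exists2 y, S y & y *+ n = x.

Definition divisible (G : zmodType) : Prop :=
  forall (x : G) (n : nat), (0 < n)%N -> exists y : G, y *+ n = x.

Definition reduced (G : zmodType) : Prop :=
  forall S : G -> Prop, is_subgroup S -> divisible_subgroup S ->
    forall x, S x -> x = 0.

(* Main.v *)
Require Import Defs.
From mathcomp Require Import all_boot all_order all_algebra.
From HB Require Import structures.
Set Implicit Arguments. Unset Strict Implicit. Unset Printing Implicit Defensive.
Import GRing.Theory.
Local Open Scope ring_scope.

Definition mkAdd (U V : zmodType) (f : U -> V) (H : zmod_morphism f) : {additive U -> V} :=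
  HB.pack f (GRing.isZmodMorphism.Build U V f H).

Lemma mkAddE (U V : zmodType) (f : U -> V) (H : zmod_morphism f) x : mkAdd H x = f x.
Proof. by []. Qed.

Lemma usc_of (G : zmodType) :
  (exists m, forall phi : {additive G -> G}, forall x,
     im_of (iter m phi) x -> im_of (iter m.+1 phi) x) -> unif_strongly_coHopfian G.
Proof.
move=> [m Hm]; exists m => phi x; split; first exact: Hm.
by move=> [y <-]; exists (phi y); rewrite iterSr.
Qed.

Lemma stab (G : zmodType) (f : G -> G) m :
  (forall x, im_of (iter m f) x <-> im_of (iter m.+1 f) x) ->
  forall k x, im_of (iter m f) x -> im_of (iter (k + m) f) x.
Proof.
move=> H; elim=> [|k IH] x //.
move=> /IH [y <-]; rewrite iterD.
have [z Hz] : im_of (iter m.+1 f) (iter m f y) by apply/H; exists y.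
by exists z; rewrite -Hz -iterD addSn addnS.
Qed.

Lemma pairMn (A D : zmodType) (g : (A * D)%type) n : g *+ n = (g.1 *+ n, g.2 *+ n).
Proof. elim: n => [|n IH]; first by case: g. by rewrite !mulrS IH. Qed.

Lemma iter_add (G : zmodType) (phi : {additive G -> G}) n x y :
  iter n phi (x + y) = iter n phi x + iter n phi y.
Proof. by elim: n => [|n IH] //=; rewrite IH raddfD. Qed.

Lemma pairB (A D : zmodType) (a c : A) (b d : D) : (a, b) - (c, d) = (a - c, b - d).
Proof. by []. Qed.
Lemma pairD (A D : zmodType) (a c : A) (b d : D) : (a, b) + (c, d) = (a + c, b + d).
Proof. by []. Qed.
Lemma fstB (A D : zmodType) (x y : (A * D)%type) : (x - y).1 = x.1 - y.1.
Proof. by []. Qed.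

Theorem mainTheorem10 (A D : zmodType) :
  reduced A -> divisible D ->
  (unif_strongly_coHopfian (A * D)%type <->
   unif_strongly_coHopfian A /\ unif_strongly_coHopfian D).
Proof.
move=> redA divD; split.
- move=> [m Hm]; split; apply: usc_of; exists m => phi x.
  + have Hp : zmod_morphism (fun g : (A * D)%type => (phi g.1, (0 : D))).
      by move=> u v /=; rewrite raddfB pairB subrr.
    set psi := mkAdd Hp.
    have It : forall n a d, iter n psi (a, d) = if n is 0 then (a, d) else (iter n phi a, 0).
      elim=> [|n IH] a d //=; rewrite IH; case: n {IH} => //.
    move=> [y Hy]; have : im_of (iter m psi) (x, 0).
      by exists (y, 0); rewrite It; case: (m) Hy => [|m0] /= <-.
    move/Hm=> [z]; rewrite iterSr mkAddE It; case: (m) => [|m0] [Ez];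
      exists (z.1); rewrite -Ez //; exact: iterSr.
  + have Hp : zmod_morphism (fun g : (A * D)%type => ((0 : A), phi g.2)).
      by move=> u v /=; rewrite raddfB pairB subrr.
    set psi := mkAdd Hp.
    have It : forall n a d, iter n psi (a, d) = if n is 0 then (a, d) else (0, iter n phi d).
      elim=> [|n IH] a d //=; rewrite IH; case: n {IH} => //.
    move=> [y Hy]; have : im_of (iter m psi) (0, x).
      by exists (0, y); rewrite It; case: (m) Hy => [|m0] /= <-.
    move/Hm=> [z]; rewrite iterSr mkAddE It; case: (m) => [|m0] [Ez];
      exists (z.2); rewrite -Ez //; exact: iterSr.
- move=> [[p Hp] [q Hq]]; apply: usc_of; exists (q + p)%N => phi x.
  have F1 : forall d, (phi (0, d)).1 = 0.
    move=> d; apply: (redA (fun a => exists d, (phi (0, d)).1 = a)).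
    + split; first by exists 0; rewrite raddf0.
      move=> _ _ [d1 <-] [d2 <-]; exists (d1 - d2).
      have -> : ((0 : A), d1 - d2) = (0, d1) - (0, d2) by rewrite pairB subrr.
      by rewrite raddfB.
    + move=> _ n [d1 <-] n0; have [y Hy] := divD d1 n n0.
      exists (phi (0, y)).1; first by exists y.
      have -> : d1 = (((0 : A), y) *+ n).2 by rewrite pairMn /= Hy.
      have E : ((0 : A), (((0 : A), y) *+ n).2) = ((0 : A), y) *+ n.
        by rewrite !pairMn /= mul0rn.
      by rewrite E raddfMn [in RHS]pairMn.
    + by exists d.
  have Ha : zmod_morphism (fun a : A => (phi (a, 0)).1).
    move=> u v /=; have -> : (u - v, (0 : D)) = (u, 0) - (v, 0) by rewrite pairB subrr.
    by rewrite raddfB.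
  have Hd : zmod_morphism (fun d : D => (phi (0, d)).2).
    move=> u v /=; have -> : ((0 : A), u - v) = (0, u) - (0, v) by rewrite pairB subrr.
    by rewrite raddfB.
  set al := mkAdd Ha; set de := mkAdd Hd.
  have F2 : forall a d, phi (a, d) = (al a, (phi (a, 0)).2 + de d).
    move=> a d; have -> : (a, d) = (a, 0) + (0, d) by rewrite pairD addr0 add0r.
    by rewrite raddfD [phi (0, d)]surjective_pairing F1 [phi (a, 0)]surjective_pairing pairD addr0.
  have F3 : forall n g, (iter n phi g).1 = iter n al g.1.
    elim=> [|n IH] g //=; rewrite -IH; case: (iter n phi g) => a d.
    by rewrite F2.
  have F4 : forall n d, iter n phi (0, d) = (0, iter n de d).
    have Z : phi (0, 0) = 0 := raddf0 phi.
    elim=> [|n IH] d; first by [].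
    by rewrite iterS IH F2 Z raddf0 /= add0r.
  move=> [g <-].
  have [a2 Ha2] : im_of (iter p.+1 al) (iter p al g.1) by apply/Hp; exists g.1.
  set u := iter p phi g - iter p.+1 phi (a2, 0).
  have Eu : u = (0, u.2).
    rewrite {1}[u]surjective_pairing; congr pair.
    by rewrite /u fstB !F3 Ha2 subrr.
  have [v Hv] : im_of (iter (p.+1 + q) de) (iter q de u.2).
    by apply: (stab (Hq de)); exists u.2.
  exists ((0, v) + (a2, 0)).
  rewrite iter_add.
  have -> : iter (q + p).+1 phi (0, v) = iter q phi u.
    by rewrite (_ : (q + p).+1 = p.+1 + q)%N ?F4 ?Hv -?F4 -?Eu // addSn addnC.
  have -> : iter (q + p).+1 phi (a2, 0) = iter q phi (iter p.+1 phi (a2, 0)).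
    by rewrite -iterD addnS.
  by rewrite -iter_add /u subrK iterD.
Qed.
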